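(* Let $(X,Y)$ be a centred bivariate Gaussian vector with unit variances and correlation $\rho\in[0,1)$. Let $S\subset\mathbb{R}$ be a bounded open set with Lebesgue measure $|S|<\infty$. For $u>0$ define $d(u,S)=\inf_{s\in S}|u+s|=\operatorname{dist}(-u,S)$. Then \[ \mathbb{P}(X-u\in S,\ Y-u\in S)\le\frac{|S|^2}{2\pi\sqrt{1-\rho^2}}\exp\Big(-\frac{d(u,S)^2}{1+\rho}\Big). \] *)

(* Defs.v *)
From HB Require Import structures.
From mathcomp Require Import all_boot all_order all_algebra.
From mathcomp Require Import all_classical all_reals all_analysis.
Set Implicit Arguments. Unset Strict Implicit. Unset Printing Implicit Defensive.
Import Order.TTheory GRing.Theory Num.Theory.
Import numFieldNormedType.Exports.
Local Open Scope classical_set_scope.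
Local Open Scope ring_scope.

Definition bivariate_normal_pdf {R : realType} (rho : R) (z : R * R) : R :=
  expR (- (z.1 ^+ 2 - 2 * rho * z.1 * z.2 + z.2 ^+ 2) / (2 * (1 - rho ^+ 2)))
  / (2 * pi * Num.sqrt (1 - rho ^+ 2)).

Definition is_std_bivariate_gaussian {d} {T : measurableType d} {R : realType}
  (P : probability T R) (X Y : T -> R) (rho : R) : Prop :=
  [/\ measurable_fun setT X, measurable_fun setT Y &
      forall A : set (R * R), measurable A ->
        P ((fun w => (X w, Y w)) @^-1` A) =
        (\int[(@lebesgue_measure R \x @lebesgue_measure R)%E]_(z in A)
            (bivariate_normal_pdf rho z)%:E)%E].

Definition dist_shift {R : realType} (u : R) (S : set R) : R :=
  inf [set `|u + s| | s in S].

(* Main.v *)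
Require Import Defs.
From HB Require Import structures.
From mathcomp Require Import all_boot all_order all_algebra.
From mathcomp Require Import all_classical all_reals all_analysis.
From mathcomp Require Import ring lra measurable_realfun.
Import Order.TTheory GRing.Theory Num.Theory.
Import numFieldNormedType.Exports.
Local Open Scope classical_set_scope.
Local Open Scope ring_scope.

Lemma lebesgue_shift (R : realType) (u : R) (A : set R) : measurable A ->
  lebesgue_measure ((fun x => x - u) @^-1` A) = lebesgue_measure A.
Proof.
have mf : measurable_fun [set: R] (fun x => x - u).
  by apply: measurable_realfun.measurable_funD => //; exact: measurable_cst.
move=> mA.
rewrite (@lebesgue_measure_unique R (@measure_function_pushforward__canonical__measure_function_Measure _ _ (measurableTypeR R) (measurableTypeR R) R lebesgue_measure _ mf) _ A mA) //.
move=> _ [[a b] _ <-] /=.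
rewrite /pushforward.
have -> : (fun x => x - u) @^-1` `]a, b]%classic = `](a + u), (b + u)]%classic.
  apply/seteqP; split => x /=; rewrite !in_itv /= ?lerBrDr ?ltrBrDr ?lerBlDr ?ltrBlDr //.
rewrite !lebesgue_measure_itv /= !lte_fin ltrD2r.
case: ifP => // _; rewrite -!EFinB; congr (_%:E).
by rewrite opprD addrACA subrr addr0.
Qed.


Lemma pdf_measurable (R : realType) (rho : R) :
  measurable_fun [set: R * R] (fun z => (bivariate_normal_pdf rho z)%:E).
Proof.
apply/measurable_EFinP; rewrite /bivariate_normal_pdf.
apply: measurable_realfun.measurable_funM; last exact: measurable_cst.
apply: measurableT_comp; first exact: measurable_expR.
apply: measurable_realfun.measurable_funM; last exact: measurable_cst.
apply: measurableT_comp => //.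
apply: measurable_realfun.measurable_funD; last by apply: measurable_funX; exact: measurable_snd.
apply: measurable_realfun.measurable_funB; first by apply: measurable_funX; exact: measurable_fst.
apply: measurable_realfun.measurable_funM; last exact: measurable_snd.
apply: measurable_realfun.measurable_funM; last exact: measurable_fst.
exact: measurable_cst.
Qed.

Theorem lemma2p4 (d : measure_display) (T : measurableType d) (R : realType)
  (P : probability T R) (X Y : T -> R) (rho : R)
  (hrho : 0 <= rho < 1) (hXY : is_std_bivariate_gaussian P X Y rho)
  (S : set R) (hSo : open S) (hSb : bounded_set S)
  (hSm : (@lebesgue_measure R S < +oo)%E) (u : R) (hu : 0 < u) :
  (P [set w | S (X w - u)%R /\ S (Y w - u)%R] <=
   ((fine (@lebesgue_measure R S)) ^+ 2 / (2 * pi * Num.sqrt (1 - rho ^+ 2))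
      * expR (- (dist_shift u S) ^+ 2 / (1 + rho)))%:E)%E.
Proof.
case: hXY => mX mY hP.
case/andP: hrho => rho0 rho1.
have mS : measurable S := open_measurable hSo.
set Su := [set x : R | S (x - u)].
have mSu : measurable Su.
  have mf : measurable_fun [set: R] (fun x => x - u).
    by apply: measurable_realfun.measurable_funD => //; exact: measurable_cst.
  by rewrite -(setTI Su); exact: mf.
set A := Su `*` Su.
have mA : measurable A := measurableX mSu mSu.
have -> : [set w | S (X w - u) /\ S (Y w - u)] = (fun w => (X w, Y w)) @^-1` A by [].
rewrite hP //.
set C := 2 * pi * Num.sqrt (1 - rho ^+ 2).
have C0 : 0 < C.
  have h : 0 < 1 - rho ^+ 2 by rewrite expr2; nra.
  by rewrite /C !mulr_gt0 ?pi_gt0 ?sqrtr_gt0.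
set dd := dist_shift u S.
set M := expR (- dd ^+ 2 / (1 + rho)) / C.
apply: (@le_trans _ _ (\int[(@lebesgue_measure R \x @lebesgue_measure R)%E]_(z in A) (cst M%:E) z)%E).
  apply: ge0_le_integral => //.
  - move=> z _; rewrite lee_fin /bivariate_normal_pdf divr_ge0 ?expR_ge0 //.
    exact: ltW.
  - apply: measurable_funTS; exact: pdf_measurable.
  move=> [x y] [/= Sx Sy]; rewrite lee_fin /bivariate_normal_pdf /M -/C.
  rewrite ler_wpM2r ?invr_ge0 ?(ltW C0) // ler_expR.
  have Sx' : S (x - u) := Sx.
  have Sy' : S (y - u) := Sy.
  have hlb : has_lbound [set `|u + s| | s in S].
    by exists 0 => _ [s _ <-]; exact: normr_ge0.
  have dd0 : 0 <= dd.
    by apply: lb_le_inf; [exists `|u + (x - u)|; exists (x - u) | move=> _ [s _ <-]].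
  have ddx : dd <= `|x|.
    have := ge_inf hlb; apply; exists (x - u) => //; congr `|_|; ring.
  have ddy : dd <= `|y|.
    have := ge_inf hlb; apply; exists (y - u) => //; congr `|_|; ring.
  have hx2 : dd ^+ 2 <= x ^+ 2.
    rewrite -(real_normK (num_real x)); nra.
  have hy2 : dd ^+ 2 <= y ^+ 2.
    rewrite -(real_normK (num_real y)); nra.
  have h1 : 0 <= (1 - rho) * (x ^+ 2 - dd ^+ 2) by rewrite mulr_ge0 // subr_ge0 // ltW.
  have h2 : 0 <= (1 - rho) * (y ^+ 2 - dd ^+ 2) by rewrite mulr_ge0 // subr_ge0 // ltW.
  have h3 : 0 <= rho * (x - y) ^+ 2 by rewrite mulr_ge0 // sqr_ge0.
  have key : 2 * (1 - rho) * dd ^+ 2 <= x ^+ 2 - 2 * rho * x * y + y ^+ 2 by nra.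
  have rp : 0 < 1 + rho by lra.
  have rm : 0 < 1 - rho by lra.
  have -> : - dd ^+ 2 / (1 + rho) = - (2 * (1 - rho) * dd ^+ 2) / (2 * (1 - rho ^+ 2)).
    field; rewrite ?lt0r_neq0 // ?expr2; nra.
  rewrite !mulNr lerN2 ler_wpM2r // invr_ge0 expr2; nra.
rewrite integral_cst //.
rewrite [Z in (_ * Z <= _)%E](_ : _ = (lebesgue_measure Su * lebesgue_measure Su)%E); last exact: product_measure1E.
rewrite !lebesgue_shift //.
have finS : lebesgue_measure S \is a fin_num by rewrite ge0_fin_numE.
rewrite -(fineK finS) -!EFinM lee_fin /M /= le_eqVlt; apply/orP; left; apply/eqP.
ring.
Qed.
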